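(* Let $\widehat{G}$ be a signed complete bigraph with bipartition $(X,Y)$. If $\widehat{G}$ has a signed simplicial edge, then $\widehat{G}$ is a chordal signed bigraph.
   Context: A signed graph is a finite simple graph each of whose edges is assigned a sign, positive or negative. A signed bigraph is a signed graph whose underlying graph is bipartite, with bipartition $(X,Y)$; it is a signed complete bigraph if the underlying graph is a complete bipartite graph. An induced subgraph is obtained by deleting vertices only (signs are inherited). A signed graph is positive if all its edges are positive. In a bigraph with bipartition $(X,Y)$, a subgraph $H$ is a biclique if every vertex of $V(H)\cap X$ is adjacent to every vertex of $V(H)\cap Y$. For an edge $uv$, $N(uv)=(N(u)\cup N(v))\setminus\{u,v\}$. An edge $uv$ of a signed bigraph is signed simplicial if $N(uv)$ induces a positive biclique. A signed bigraph $\widehat G$ is chordal (a chordal signed bigraph) if its edges can be ordered $e_1,\dots,e_m$ so that each $e_i$ is signed simplicial in the signed bigraph $\widehat G-\{e_1,\dots,e_{i-1}\}$ obtained by deleting these edges (but no vertices). *)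

(* Defs.v *)
From mathcomp Require Import all_boot.
Set Implicit Arguments. Unset Strict Implicit. Unset Printing Implicit Defensive.

(* A signed graph on a finite vertex type V is given by its edge set
   E : {set {set V}} (each edge an unordered pair {u,v}) and a sign
   function sg : {set V} -> bool (true = positive), only relevant on E.
   The bipartition (X,Y) is given by X : {set V}, with Y = ~: X. *)

Section SignedBigraphs.
Variable V : finType.

Definition is_bigraph (E : {set {set V}}) (X : {set V}) : Prop :=
  forall e, e \in E -> exists x y, [/\ x \in X, y \notin X & e = [set x; y]].

Definition is_complete_bigraph (E : {set {set V}}) (X : {set V}) : Prop :=
  is_bigraph E X /\
  (forall x y, x \in X -> y \notin X -> [set x; y] \in E).

Definition nbhd (E : {set {set V}}) (u : V) : {set V} :=
  [set w | [set u; w] \in E].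

Definition edge_nbhd (E : {set {set V}}) (e : {set V}) : {set V} :=
  (\bigcup_(w in e) nbhd E w) :\: e.

Definition induces_biclique (E : {set {set V}}) (X S : {set V}) : Prop :=
  forall x y, x \in S -> y \in S -> x \in X -> y \notin X -> [set x; y] \in E.

Definition induces_positive (E : {set {set V}}) (sg : {set V} -> bool)
  (S : {set V}) : Prop :=
  forall f, f \in E -> f \subset S -> sg f.

Definition signed_simplicial (E : {set {set V}}) (X : {set V})
  (sg : {set V} -> bool) (e : {set V}) : Prop :=
  e \in E /\
  induces_biclique E X (edge_nbhd E e) /\ induces_positive E sg (edge_nbhd E e).

Definition chordal_signed_bigraph (E : {set {set V}}) (X : {set V})
  (sg : {set V} -> bool) : Prop :=
  exists s : seq {set V},
    [/\ uniq s, (forall e, (e \in s) = (e \in E)) &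
        forall i, i < size s ->
          signed_simplicial (E :\: [set f in take i s]) X sg (nth set0 s i)].

End SignedBigraphs.

(* Main.v *)
Require Import Defs.
From mathcomp Require Import all_boot zify.
Set Implicit Arguments. Unset Strict Implicit. Unset Printing Implicit Defensive.

Section S.
Variables (V : finType) (E : {set {set V}}) (X : {set V}) (sg : {set V} -> bool) (x y : V).
Hypothesis Hcomp : is_complete_bigraph E X.
Hypothesis Hxy : (x \in X) != (y \in X).
Hypothesis Hsimp : signed_simplicial E X sg [set x; y].

Definition opp (p q : V) := (p \in X) != (q \in X).
Definition r (w : V) : nat := if w == x then 0 else if w == y then 1 else (enum_rank w).+2.
Definition N := #|V|.+2.
Definition key (f : {set V}) := (N - \max_(w in f) (N - r w)) * N + \max_(w in f) r w.

Lemma r_lt w : r w < N.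
Proof. rewrite /r /N; case: eqP => _; first by []. case: eqP => _; first by [].
have h : (enum_rank w : nat) < #|V| := ltn_ord _. lia. Qed.

Lemma r_inj : injective r.
Proof.
have nxy : x != y by apply: contraNneq Hxy => ->.
move=> p q; rewrite /r.
repeat case: ifP => /eqP ?; subst => //; try (by move/eqP: nxy);
  by move=> [] /ord_inj /enum_rank_inj.
Qed.

Lemma key2 p q : p != q -> key [set p; q] = minn (r p) (r q) * N + maxn (r p) (r q).
Proof.
move=> pq; rewrite /key !big_setU1 ?inE // !big_set1.
have := r_lt p; have := r_lt q. move=> h1 h2. have mE : forall a b, SemiGroup.Law.sort maxn a b = maxn a b by []. rewrite !mE. have -> : N - maxn (N - r p) (N - r q) = minn (r p) (r q) by lia. by [].
Qed.


Lemma edge_form f : f \in E -> exists p q, opp p q /\ f = [set p; q].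
Proof.
move/(Hcomp.1) => [p [q [px qx ->]]]; exists p, q; split => //.
by rewrite /opp px (negbTE qx).
Qed.

Lemma opp_neq p q : opp p q -> p != q.
Proof. by apply: contraNneq => ->; rewrite /opp eqxx. Qed.

Lemma opp_sym p q : opp p q = opp q p.
Proof. by rewrite /opp eq_sym. Qed.

Lemma comp p q : opp p q -> [set p; q] \in E.
Proof.
rewrite /opp; case pX: (p \in X); case qX: (q \in X) => // _.
  by apply: Hcomp.2; rewrite ?qX.
by rewrite setUC; apply: Hcomp.2; rewrite ?pX.
Qed.

Lemma edgeE u z : [set u; z] \in E -> opp u z.
Proof.
case/edge_form => p [q [opq e]].
have uin : u \in [set p; q] by rewrite -e !inE eqxx.
have zin : z \in [set p; q] by rewrite -e !inE eqxx orbT.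
have pin : p \in [set u; z] by rewrite e !inE eqxx.
have qin : q \in [set u; z] by rewrite e !inE eqxx orbT.
move: uin zin pin qin; rewrite !inE.
have npq := opp_neq opq.
case/orP=> /eqP ->; case/orP => /eqP ->; rewrite ?eqxx ?orbb //=.
- by move=> _ /eqP qp; rewrite qp eqxx in npq.
- by rewrite opp_sym.
- by move=> /eqP pq; rewrite pq eqxx in npq.
Qed.

Lemma lexlt (m1 M1 m2 M2 : nat) : M1 < N -> m1 < m2 -> m1 * N + M1 < m2 * N + M2.
Proof.
move=> h1 h2.
have : m1.+1 * N <= m2 * N by rewrite leq_mul2r h2 orbT.
rewrite mulSn. lia.
Qed.

Lemma lex_inj (m1 M1 m2 M2 : nat) : M1 < N -> M2 < N -> m1 * N + M1 = m2 * N + M2 ->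
  m1 = m2 /\ M1 = M2.
Proof.
move=> h1 h2 e.
have em : m1 = m2.
  case: (ltngtP m1 m2) => // hl.
  - by have := lexlt M2 h1 hl; rewrite e ltnn.
  - by have := lexlt M1 h2 hl; rewrite e ltnn.
by split => //; subst; lia.
Qed.

Lemma key_inj f g : f \in E -> g \in E -> key f = key g -> f = g.
Proof.
case/edge_form => p [q [opq ->]]; case/edge_form => p' [q' [opq' ->]].
rewrite !key2 ?opp_neq //.
have := r_lt p; have := r_lt q; have := r_lt p'; have := r_lt q' => h1 h2 h3 h4.
move=> ek.
have h5 : maxn (r p) (r q) < N by lia.
have h6 : maxn (r p') (r q') < N by lia.
have [emin emax] := lex_inj h5 h6 ek.
have rpq : r p != r q by apply: contra (opp_neq opq) => /eqP/r_inj ->.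
have rpq' : r p' != r q' by apply: contra (opp_neq opq') => /eqP/r_inj ->.
clear h5 h6 ek.
case: (leqP (r p) (r q)) => hpq; case: (leqP (r p') (r q')) => hpq'.
- have e1 : r p = r p' by lia.
  have e2 : r q = r q' by lia.
  by rewrite (r_inj e1) (r_inj e2).
- have e1 : r p = r q' by lia.
  have e2 : r q = r p' by lia.
  by rewrite (r_inj e1) (r_inj e2) setUC.
- have e1 : r p = r q' by lia.
  have e2 : r q = r p' by lia.
  by rewrite (r_inj e1) (r_inj e2) setUC.
- have e1 : r p = r p' by lia.
  have e2 : r q = r q' by lia.
  by rewrite (r_inj e1) (r_inj e2).
Qed.

Lemma nbF (F : {set {set V}}) (u v z : V) : u != v -> z \in edge_nbhd F [set u; v] =
  [&& z != u, z != v & ([set u; z] \in F) || ([set v; z] \in F)].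
Proof.
move=> uv; have hu : u \notin [set v] by rewrite inE.
rewrite /edge_nbhd inE (big_setU1 _ hu) big_set1 !inE negb_or.
by rewrite andbA.
Qed.


Lemma nxy : x != y.
Proof. by apply: contraNneq Hxy => ->. Qed.

Lemma rx : r x = 0.
Proof. by rewrite /r eqxx. Qed.

Lemma ry : r y = 1.
Proof. by rewrite /r eq_sym (negbTE nxy) eqxx. Qed.

Lemma low u w z : r z < r u -> r u <= r w -> opp w z -> key [set w; z] < r u * N.
Proof.
move=> zu uw o; rewrite key2 ?opp_neq //.
have -> : minn (r w) (r z) = r z by lia.
have -> : maxn (r w) (r z) = r w by lia.
by have := @lexlt (r z) (r w) (r u) 0 (r_lt w) zu; rewrite addn0.
Qed.

Lemma simp (F : {set {set V}}) u v : opp u v -> r u < r v ->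
  (forall g, g \in F = (g \in E) && (key [set u; v] <= key g)) ->
  signed_simplicial F X sg [set u; v].
Proof.
move=> ouv ruv HF.
have nuv := opp_neq ouv.
have ke : key [set u; v] = r u * N + r v.
  rewrite key2 //.
  have -> : minn (r u) (r v) = r u by lia.
  by have -> : maxn (r u) (r v) = r v by lia.
have big z : z \in edge_nbhd F [set u; v] -> r u < r z.
  rewrite nbF // => /and3P [zu zv hz].
  rewrite ltnNge leq_eqVlt; apply/negP => /orP [/eqP ezu | lzu].
    by move/r_inj: ezu => ezu; rewrite ezu eqxx in zu.
  case/orP: hz; rewrite HF => /andP [/edgeE o kz].
    by have := low lzu (leqnn _) o; rewrite ke in kz; lia.
  by have := low lzu (ltnW ruv) o; rewrite ke in kz; lia.
split; first by rewrite HF comp // leqnn.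
split.
  move=> p q hp hq pX qX.
  have opq : opp p q by rewrite /opp pX qX.
  rewrite HF comp //= ke key2 ?opp_neq //.
  have := big p hp; have := big q hq => h1 h2.
  apply: ltnW; apply: lexlt; [exact: r_lt | lia].
move=> f fF fsub.
have fE : f \in E by move: fF; rewrite HF => /andP[].
apply: Hsimp.2.2 => //.
apply/subsetP => z zf.
have zN := subsetP fsub z zf.
have rz := big z zN.
rewrite nbF; last exact: nxy.
have zx : z != x by apply: contraTneq rz => ->; rewrite rx.
have zy : z != y.
  apply/eqP => ezy; subst z.
  rewrite ry in rz.
  have ru0 : r u = 0 by lia.
  have ux : u = x by apply: r_inj; rewrite rx.
  subst u.
  move: zN; rewrite nbF // => /and3P [_ yv]; rewrite !HF.
  case/orP => [/andP [_ k] | /andP [/edgeE o _]].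
    rewrite ke key2 ?nxy // rx ry /= !mul0n in k.
    have rv1 : r v = r y by rewrite ry; lia.
    by move/r_inj: rv1 => rv1; rewrite rv1 eqxx in yv.
  by move: o ouv Hxy; rewrite /opp; case: (x \in X); case: (v \in X); case: (y \in X).
rewrite zx zy /=.
case ozx : (opp x z); first by rewrite comp.
have oyz : opp y z by move: ozx Hxy; rewrite /opp; case: (x \in X); case: (z \in X); case: (y \in X).
by rewrite (comp oyz) orbT.
Qed.


Definition chordalF (F : {set {set V}}) : Prop :=
  exists s : seq {set V},
    [/\ uniq s, (forall e, (e \in s) = (e \in F)) &
        forall i, i < size s ->
          signed_simplicial (F :\: [set f in take i s]) X sg (nth set0 s i)].

Lemma chordal0 (F : {set {set V}}) : F = set0 -> chordalF F.
Proof. by move=> ->; exists [::]; split => // e; rewrite inE. Qed.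

Lemma ind n : forall F : {set {set V}}, #|F| <= n -> F \subset E ->
  (forall f g, f \in F -> g \in E -> key f <= key g -> g \in F) -> chordalF F.
Proof.
elim: n => [|n IH] F hc hsub hup.
  by apply: chordal0; apply: cards0_eq; move: hc; rewrite leqn0 => /eqP.
case: (set_0Vmem F) => [->|[f0 f0F]]; first exact: chordal0.
case: (arg_minnP key f0F) => e eF emin.
have {}eF : e \in F by [].
have {}emin : forall j, j \in F -> key e <= key j by [].
have eE : e \in E by apply: (subsetP hsub).
have [s' [us' ms' ss']] : chordalF (F :\ e).
  apply: IH.
  - by rewrite -ltnS; apply: leq_trans (proper_card (properD1 eF)) hc.
  - by apply: subset_trans hsub; apply: subsetDl.
  - move=> f g; rewrite !inE => /andP [fe fF] gE kfg.
    rewrite (hup f g fF gE kfg) andbT.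
    apply: contraNneq fe => ge; subst g.
    apply/eqP; apply: key_inj => //; first exact: (subsetP hsub).
    by apply/eqP; rewrite eqn_leq kfg emin.
exists (e :: s'); split.
- by rewrite /= us' andbT ms' !inE eqxx.
- by move=> g; rewrite inE ms' !inE; case: eqVneq => // ->.
case=> [|i] /=.
  move=> _.
  have -> : F :\: [set f in [::]] = F by apply/setP => z; rewrite !inE.
  have HF : forall g, g \in F = (g \in E) && (key e <= key g).
    move=> g; apply/idP/idP.
      by move=> gF; rewrite (subsetP hsub) //= emin.
    by case/andP => gE kg; apply: hup kg.
  case/edge_form: eE HF => p [q [opq ->]] HF.
  case: (ltngtP (r p) (r q)) => hpq.
  - exact: simp.
  - by rewrite setUC in HF *; apply: simp => //; rewrite opp_sym.
  - by move/r_inj: hpq => hpq; move: (opp_neq opq); rewrite hpq eqxx.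
move=> hi.
have -> : F :\: [set f in e :: take i s'] = (F :\ e) :\: [set f in take i s'].
  apply/setP => z; rewrite !inE.
  by case: (z == e); case: (z \in take i s'); case: (z \in F).
exact: ss'.
Qed.

End S.

Theorem lemma2p1 (V : finType) (E : {set {set V}}) (X : {set V})
    (sg : {set V} -> bool) :
  is_complete_bigraph E X ->
  (exists e, signed_simplicial E X sg e) ->
  chordal_signed_bigraph E X sg.
Proof.
move=> Hc [e He].
have [x [y [ox xy]]] := edge_form Hc He.1.
subst e.
have := @ind V E X sg x y Hc ox He #|E| E (leqnn _) (subxx _).
by apply => f g _ gE _.
Qed.
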